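(* Let $(X,\leqslant)$ be a finite partially ordered set, $U$ a finite set of users and $\lambda\colon U\to X$. Then for any directed path $x_1x_2\dots x_p$ with $p>2$ in $H^*=(X,E_0^* )$ (that is, $x_1>x_2>\dots>x_p$), we have \[ \omega(x_1x_p)\geqslant\sum_{i=1}^{p-1}\omega(x_ix_{i+1}). \]
   Context: $E_0^*=\{xy:x,y\in X,\ x>y\}$. $U(x)=\{u\in U:\lambda(u)=x\}$; for $yz\in E_0^*$, $\gamma(yz)=\{x\in X:x\geqslant z,\ x\not\geqslant y\}$ and $\omega(yz)=\sum_{x\in\gamma(yz)}|U(x)|$. *)

(* Defs.v *)
From mathcomp Require Import all_boot all_order.
Set Implicit Arguments. Unset Strict Implicit. Unset Printing Implicit Defensive.
Import Order.POrderTheory.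
Local Open Scope order_scope.

Section Defs.
Variables (d : Order.disp_t) (X : finPOrderType d) (U : finType) (lam : U -> X).

Definition Uof (x : X) : {set U} := [set u | lam u == x].

Definition gamma (y z : X) : {set X} := [set x | (z <= x) && ~~ (y <= x)].

Definition omega (y z : X) : nat := (\sum_(x in gamma y z) #|Uof x|)%N.
End Defs.

(* Main.v *)
Require Import Defs.
From mathcomp Require Import all_boot all_order.
Local Open Scope order_scope.
Import Order.POrderTheory.

Lemma sum_split (T : finType) (f : T -> nat) (A B C : pred T) :
  (forall x, A x -> C x) -> (forall x, B x -> C x) -> (forall x, A x -> ~~ B x) ->
  (\sum_(x | A x) f x + \sum_(x | B x) f x <= \sum_(x | C x) f x)%N.
Proof.
move=> AC BC AB; rewrite (bigID A C) /=; apply: leq_add.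
  rewrite leq_eqVlt; apply/orP; left; apply/eqP; apply: eq_bigl => x.
  by case Ax: (A x); rewrite ?andbF // andbT AC.
rewrite (bigID B (fun x => C x && ~~ A x)) /=; apply: leq_trans (leq_addr _ _).
rewrite leq_eqVlt; apply/orP; left; apply/eqP; apply: eq_bigl => x.
case Bx: (B x); rewrite ?andbF // andbT BC //=.
by case Ax: (A x) => //; move: (AB x Ax); rewrite Bx.
Qed.

Theorem corollary3 (d : Order.disp_t) (X : finPOrderType d) (U : finType)
    (lam : U -> X) (p : nat) (x : nat -> X) :
  (2 < p)%N ->
  (forall i : nat, (1 <= i)%N -> (i < p)%N -> x i.+1 < x i) ->
  (omega lam (x 1%N) (x p) >= \sum_(1 <= i < p) omega lam (x i) (x i.+1))%N.
Proof.
move=> hp hx.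
have hle : forall n, (1 <= n)%N -> (n <= p)%N -> x n <= x 1%N.
  elim=> // n IH h1 hn.
  case: n IH h1 hn => [|n] IH _ hn; first by [].
  apply: le_trans (IH is_true_true (ltnW hn)).
  exact: ltW (hx n.+1 is_true_true hn).
have key : forall n, (1 <= n)%N -> (n <= p)%N ->
  (\sum_(1 <= i < n) omega lam (x i) (x i.+1) <= omega lam (x 1%N) (x n))%N.
  elim=> // n IH h1 hn.
  case: n IH h1 hn => [|n] IH _ hn; first by rewrite big_geq.
  rewrite big_nat_recr //=.
  apply: leq_trans (leq_add (IH is_true_true (ltnW hn)) (leqnn _)) _.
  have hlt := hx n.+1 is_true_true hn.
  rewrite /omega; apply: sum_split => y.
  - rewrite !inE => /andP [h1' h2]; rewrite h2 andbT.
    exact: le_trans (ltW hlt) h1'.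
  - rewrite !inE => /andP [h1' h2]; rewrite h1' /=.
    apply/negP => hy; move/negP: h2; apply.
    exact: le_trans (hle n.+1 is_true_true (ltnW hn)) hy.
  - by rewrite !inE => /andP [h1' _]; rewrite h1' andbF.
exact: key (ltnW (ltnW hp)) (leqnn p).
Qed.
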